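(* Let $\Gamma$ be a $\Bbbk$-algebra and $\sim$ an equivalence relation on $\mathrm{cfs}(\Gamma)$. If $V$ is a finite-dimensional block module, then every composition factor of $V$ is isomorphic to $S_{\mathfrak m}$ for some $\mathfrak m\in B$ with $B\in\mathrm{Supp}(V)$.
   Context: $\mathrm{cfs}(\Gamma)$: maximal two-sided ideals $\mathfrak m$ of $\Gamma$ with $\dim\Gamma/\mathfrak m<\infty$; $S_{\mathfrak m}$ is the unique simple $\Gamma/\mathfrak m$-module. For a class $B$, $\mathcal W(B)=\{\mathfrak m_1\cdots\mathfrak m_k:k\ge0,\mathfrak m_i\in B\}$; for a $\Gamma$-module $V$, $V(B)=\{v:\mathfrak mv=0$ for some $\mathfrak m\in\mathcal W(B)\}$. $V$ is a block module if $V=\bigoplus_BV(B)$; $\mathrm{Supp}(V)=\{B:V(B)\neq0\}$. *)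

(* Defs.v *)
From HB Require Import structures.
From mathcomp Require Import all_boot all_order all_algebra.
Set Implicit Arguments. Unset Strict Implicit. Unset Printing Implicit Defensive.
Import GRing.Theory.
Local Open Scope ring_scope.

Definition subsetG (G : Type) := G -> Prop.

Section Defs.
Variables (k : fieldType) (G : algType k).

Definition ideal2 (I : subsetG G) : Prop :=
  [/\ I 0, (forall x y, I x -> I y -> I (x + y)) &
      (forall a x, I x -> I (a * x) /\ I (x * a))].

Definition max_ideal2 (I : subsetG G) : Prop :=
  [/\ ideal2 I, ~ I 1 &
      forall J : subsetG G, ideal2 J -> ~ J 1 -> (forall x, I x -> J x) ->
        forall x, J x -> I x].

(* dim_k (Gamma / I) < infinity *)
Definition fin_codim (I : subsetG G) : Prop :=
  exists n (e : 'I_n -> G), forall g, exists c : 'I_n -> k,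
    I (g - \sum_(i < n) c i *: e i).

Definition cfs (I : subsetG G) : Prop := max_ideal2 I /\ fin_codim I.

(* product of ideals m_1 m_2 ... m_k (the empty product is Gamma) *)
Fixpoint iprod (ms : seq (subsetG G)) : subsetG G :=
  match ms with
  | [::] => fun _ => True
  | m :: ms' => fun x => exists n (a b : 'I_n -> G),
      [/\ forall i, m (a i), forall i, iprod ms' (b i) & x = \sum_(i < n) a i * b i]
  end.

Fixpoint all_in (B : subsetG G -> Prop) (ms : seq (subsetG G)) : Prop :=
  match ms with [::] => True | m :: ms' => B m /\ all_in B ms' end.

Definition blk (R : subsetG G -> subsetG G -> Prop) (m0 : subsetG G) :
  subsetG G -> Prop := fun m => cfs m /\ R m0 m.

Definition equiv_on_cfs (R : subsetG G -> subsetG G -> Prop) : Prop :=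
  [/\ forall m, cfs m -> R m m,
      forall m m', cfs m -> cfs m' -> R m m' -> R m' m &
      forall m1 m2 m3, cfs m1 -> cfs m2 -> cfs m3 -> R m1 m2 -> R m2 m3 -> R m1 m3].

Variable V : vectType k.

Definition is_module (act : G -> V -> V) : Prop :=
  (forall a b v, act (a + b) v = act a v + act b v) /\
  (forall c a v, act (c *: a) v = c *: act a v) /\
  (forall a u v, act a (u + v) = act a u + act a v) /\
  (forall a c v, act a (c *: v) = c *: act a v) /\
  (forall v, act 1 v = v) /\
  (forall a b v, act (a * b) v = act a (act b v)).

Definition Vpart (act : G -> V -> V) (B : subsetG G -> Prop) (v : V) : Prop :=
  exists ms, all_in B ms /\ forall x, iprod ms x -> act x v = 0.

(* V = (+)_B V(B), B ranging over the blocks of cfs(Gamma) for R *)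
Definition block_module (act : G -> V -> V) (R : subsetG G -> subsetG G -> Prop) : Prop :=
  (forall v, exists r (m0 : 'I_r -> subsetG G) (w : 'I_r -> V),
      [/\ forall i, cfs (m0 i), forall i, Vpart act (blk R (m0 i)) (w i)
        & v = \sum_(i < r) w i]) /\
  (forall r (m0 : 'I_r -> subsetG G) (w : 'I_r -> V),
      (forall i, cfs (m0 i)) -> (forall i j, i != j -> ~ R (m0 i) (m0 j)) ->
      (forall i, Vpart act (blk R (m0 i)) (w i)) ->
      \sum_(i < r) w i = 0 -> forall i, w i = 0).

Definition in_Supp (act : G -> V -> V) R (m0 : subsetG G) : Prop :=
  cfs m0 /\ exists v, Vpart act (blk R m0) v /\ v <> 0.

Definition submodule (act : G -> V -> V) (U : {vspace V}) : Prop :=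
  forall a u, u \in U -> act a u \in U.

Definition simple_factor (act : G -> V -> V) (W U : {vspace V}) : Prop :=
  [/\ submodule act W, submodule act U, (W <= U)%VS, W != U &
      forall X, submodule act X -> (W <= X)%VS -> (X <= U)%VS -> X = W \/ X = U].

Definition comp_series (act : G -> V -> V) (r : nat) (U : nat -> {vspace V}) : Prop :=
  [/\ U 0%N = 0%VS, U r = fullv & forall i, (i < r)%N -> simple_factor act (U i) (U i.+1)].

(* The factor U/W is isomorphic to S_m, the unique simple Gamma/m-module,
   i.e. U/W is a simple Gamma-module annihilated by m. *)
Definition factor_iso_S (act : G -> V -> V) (m : subsetG G) (W U : {vspace V}) : Prop :=
  simple_factor act W U /\ forall x u, m x -> u \in U -> act x u \in W.

End Defs.

(* Main.v *)
Require Import Defs.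
From mathcomp Require Import all_boot all_order all_algebra.
From Stdlib Require Import Classical.
From mathcomp Require Import zify.
Set Implicit Arguments. Unset Strict Implicit. Unset Printing Implicit Defensive.
Import GRing.Theory.
Local Open Scope ring_scope.

Lemma act0 (k : fieldType) (G : algType k) (V : vectType k) (act : G -> V -> V) :
  is_module act -> forall a, act a 0 = 0.
Proof.
case=> _ [_ [_ [Hs _]]] a.
by have := Hs a 0 0; rewrite !scale0r.
Qed.

Lemma act_sum (k : fieldType) (G : algType k) (V : vectType k) (act : G -> V -> V) :
  is_module act -> forall x r (w : 'I_r -> V), (forall j, act x (w j) = 0) ->
  act x (\sum_(j < r) w j) = 0.
Proof.
move=> Hm x r w Hw.
apply: (big_ind (fun v => act x v = 0)) => //; first exact: act0.
move=> a b Ha Hb; case: Hm => _ [_ [Hd _]].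
by rewrite Hd Ha Hb addr0.
Qed.

Lemma iprod_mulr (k : fieldType) (G : algType k) (ms : seq (subsetG G)) x c :
  iprod ms x -> iprod ms (x * c).
Proof.
elim: ms x => [|m ms IH] x //=.
case=> n [a [b [Ha Hb ->]]].
exists n, a, (fun i => b i * c); split => //; first by move=> i; apply: IH.
by rewrite mulr_suml; apply: eq_bigr => i _; rewrite mulrA.
Qed.

Lemma all_in_impl (k : fieldType) (G : algType k) (B C : subsetG G -> Prop) ms :
  (forall m, B m -> C m) -> all_in B ms -> all_in C ms.
Proof. move=> H; elim: ms => [|m ms IH] //= [Hm Hms]; split; auto. Qed.

Definition NK (k : fieldType) (G : algType k) (V : vectType k) (act : G -> V -> V)
  (Good : V -> Prop) (m : subsetG G) :=
  forall u, Good u -> exists y, m y /\ Good (act y u).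

Lemma chain (k : fieldType) (G : algType k) (V : vectType k) (act : G -> V -> V) Good :
  is_module act -> forall ms, all_in (NK act Good) ms ->
  forall u, Good u -> exists x, iprod ms x /\ Good (act x u).
Proof.
move=> Hm; elim=> [|m ms IH] /=.
  move=> _ u Gu; exists 1; split => //.
  by case: Hm => _ [_ [_ [_ [H1 _]]]]; rewrite H1.
case=> Hnk Hall u Gu.
have [x' [Hx' Gx']] := IH Hall u Gu.
have [y [Hy Gy]] := Hnk _ Gx'.
exists (y * x'); split.
  exists 1%N, (fun _ => y), (fun _ => x'); split => //.
  by rewrite big_ord1.
by case: Hm => _ [_ [_ [_ [_ H6]]]]; rewrite H6.
Qed.

Lemma multi (k : fieldType) (G : algType k) (V : vectType k) (act : G -> V -> V) Good :
  is_module act -> forall r (w : 'I_r -> V),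
  (forall j, exists ms, all_in (NK act Good) ms /\ forall x, iprod ms x -> act x (w j) = 0) ->
  forall u, Good u -> exists x, (forall j, act x (w j) = 0) /\ Good (act x u).
Proof.
move=> Hm; elim=> [|r IH] w Hw u Gu.
  by exists 1; split; [case | case: Hm => _ [_ [_ [_ [H1 _]]]]; rewrite H1].
have [x' [Hx' Gx']] := IH (fun j => w (lift ord0 j)) (fun j => Hw (lift ord0 j)) u Gu.
have [ms0 [Hall0 Hk0]] := Hw ord0.
have [y [Hy Gy]] := chain Hm Hall0 Gx'.
have H6 : forall a b v, act (a * b) v = act a (act b v) by case: Hm => _ [_ [_ [_ [_ H6]]]].
exists (y * x'); split; last by rewrite H6.
move=> j; case: (unliftP ord0 j) => [j' ->|->].
  by rewrite H6 Hx' (act0 Hm).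
by apply: Hk0; apply: iprod_mulr.
Qed.

Lemma vspace_of (k : fieldType) (V : vectType k) (P : V -> Prop) :
  P 0 -> (forall u v, P u -> P v -> P (u + v)) -> (forall c u, P u -> P (c *: u)) ->
  exists X : {vspace V}, forall v, v \in X <-> P v.
Proof.
move=> P0 PD PZ.
suff : forall n (W : {vspace V}), (\dim (fullv : {vspace V}) - \dim W <= n)%N ->
  (forall v, v \in W -> P v) -> exists X : {vspace V}, forall v, v \in X <-> P v.
  by move/(_ _ 0%VS (leqnn _)); apply => v; rewrite memv0 => /eqP ->.
elim=> [|n IH] W Hd HW.
  exists W => v; split; first exact: HW.
  move=> _; have : W == fullv.
    by rewrite eqEdim subvf /=; rewrite -subn_eq0; apply/eqP; lia.
  by move/eqP ->; rewrite memvf.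
case: (classic (forall v, P v -> v \in W)) => Hc.
  by exists W => v; split; [apply: HW | apply: Hc].
have [v [Pv vW]] : exists v, P v /\ v \notin W.
  apply: NNPP => H; apply: Hc => v Pv; apply: NNPP => H'; apply: H; exists v.
  by split => //; apply/negP.
apply: (IH (W + <[v]>)%VS).
  have Hs : (W <= W + <[v]>)%VS by apply: addvSl.
  have := ltn_leqif (dimv_leqif_sup Hs).
  have -> : (W + <[v]> <= W)%VS = false.
    apply/negP => /subvP H; move: vW; rewrite H //.
    by apply: (subvP (addvSr W <[v]>%VS)); apply: memv_line.
  move=> /= Hlt.
  have := dimvS (subvf (W + <[v]>)%VS); lia.
move=> x /memv_addP [a Ha [b /vlineP [c ->] ->]].
by apply: PD; [apply: HW | apply: PZ].
Qed.

Lemma nonkill (k : fieldType) (G : algType k) (V : vectType k) (act : G -> V -> V)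
  (W U : {vspace V}) (m : subsetG G) :
  is_module act -> simple_factor act W U -> ideal2 m ->
  ~ (forall x u, m x -> u \in U -> act x u \in W) ->
  NK act (fun u => u \in U /\ u \notin W) m.
Proof.
move=> Hm [SW SU WU WneU Hmax] [_ _ Hid] Hnk.
case: (Hm) => _ [_ [Hd [Hs [_ H6]]]].
have [X HX] : exists X : {vspace V}, forall v, v \in X <->
    (v \in U /\ forall y, m y -> act y v \in W).
  apply: vspace_of.
- split; first exact: mem0v.
  by move=> y _; rewrite (act0 Hm) mem0v.
- move=> u v [Hu Hu'] [Hv Hv']; split; first exact: memvD.
  by move=> y Hy; rewrite Hd memvD //; auto.
- move=> c u [Hu Hu']; split; first exact: memvZ.
  by move=> y Hy; rewrite Hs memvZ //; auto.
have SX : submodule act X.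
  move=> a u /HX [Hu Hu']; apply/HX; split; first exact: SU.
  by move=> y Hy; rewrite -H6; apply: Hu'; case: (Hid a y Hy).
have WX : (W <= X)%VS.
  apply/subvP => w Hw; apply/HX; split; first exact: (subvP WU).
  by move=> y _; apply: SW.
have XU : (X <= U)%VS by apply/subvP => u /HX [].
case: (Hmax X SX WX XU) => HXe.
  move=> u [Hu HuW].
  apply: NNPP => Hn; move: HuW; rewrite -HXe => /negP; apply; apply/HX; split => //.
  move=> y Hy; apply: NNPP => Hn'; apply: Hn; exists y; split => //; split.
    exact: SU.
  by apply/negP.
exfalso; apply: Hnk => x u Hx Hu.
by move: Hu; rewrite -HXe => /HX [_]; apply.
Qed.

Theorem mainTheorem16 (k : fieldType) (G : algType k)
  (R : subsetG G -> subsetG G -> Prop) (V : vectType k) (act : G -> V -> V) :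
  equiv_on_cfs R -> is_module act -> block_module act R ->
  forall (r : nat) (U : nat -> {vspace V}), comp_series act r U ->
  forall i, (i < r)%N ->
  exists m0 m, [/\ in_Supp act R m0, blk R m0 m & factor_iso_S act m (U i) (U i.+1)].
Proof.
move=> _ Hm [Hdec _] r U [_ _ Hs] i Hi.
apply: NNPP => Hno.
have Hsf := Hs i Hi.
case: (Hsf) => SW SU WU WneU Hmax.
have : ~~ (U i.+1 <= U i)%VS.
  by apply/negP => H; move: WneU; rewrite eqEsubv WU H.
case/subvPn => u0 Hu0 Hu0W.
have [r' [m0 [w [Hcfs HVp Hu0e]]]] := Hdec u0.
have Hw : forall j, exists ms, all_in (NK act (fun u => u \in U i.+1 /\ u \notin U i)) ms
    /\ forall x, iprod ms x -> act x (w j) = 0.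
  move=> j.
  have [ms [Hall Hkill]] := HVp j.
  case: (classic (w j = 0)) => Hw0.
    exists [::]; split => // y _; rewrite Hw0; exact: act0.
  exists ms; split => //.
  apply: (all_in_impl _ Hall) => m Hb.
  apply: nonkill => //.
    by case: Hb => [[[]]].
  move=> Hk; apply: Hno; exists (m0 j), m; split => //.
  split; first exact: Hcfs.
  by exists (w j); split.
have [x [Hx [Gx1 Gx2]]] := multi Hm Hw (conj Hu0 Hu0W).
by move: Gx2; rewrite Hu0e (act_sum Hm Hx) mem0v.
Qed.
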